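(* Let $R$ be a ring and let $M$ be a right $R$-module which is a submodule of a right $R$-module $E$ that is both injective and projective. Then $M$ is subinjective extension-reflecting; that is, for every short exact sequence of right $R$-modules $0\to A\to B\to C\to 0$, if $M\in \underline{\mathfrak{In}}^{-1}(A)\cap \underline{\mathfrak{In}}^{-1}(C)$, then $M\in \underline{\mathfrak{In}}^{-1}(B)$.
   Context: $R$ is an associative ring with identity and modules are unital right $R$-modules. For right $R$-modules $X$ and $Y$, write $X\in \underline{\mathfrak{In}}^{-1}(Y)$ (the subinjectivity domain of $Y$) if $Y$ is $X$-subinjective, i.e., for every module $C$ containing $X$ as a submodule and every homomorphism $f\colon X\to Y$ there is a homomorphism $C\to Y$ whose restriction to $X$ is $f$. *)

(* Defs.v *)
(* Right R-modules are modelled as left modules over the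
   converse ring R^c (lmodType R^c). *)
From HB Require Import structures.
From mathcomp Require Import all_boot all_order all_algebra.
Set Implicit Arguments. Unset Strict Implicit. Unset Printing Implicit Defensive.
Import GRing.Theory.
Local Open Scope ring_scope.

Notation rmodType R := (lmodType (R^c)%R).

Definition subinjective (R : pzRingType) (X Y : rmodType R) : Prop :=
  forall (C : rmodType R) (i : {linear X -> C}) (f : {linear X -> Y}),
    injective i ->
    exists g : {linear C -> Y}, forall x : X, g (i x) = f x.

Definition in_subinj_domain (R : pzRingType) (X Y : rmodType R) : Prop :=
  subinjective X Y.

Definition injective_module (R : pzRingType) (E : rmodType R) : Prop :=
  forall (A B : rmodType R) (i : {linear A -> B}) (f : {linear A -> E}),
    injective i ->
    exists g : {linear B -> E}, forall a : A, g (i a) = f a.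

Definition projective_module (R : pzRingType) (E : rmodType R) : Prop :=
  forall (B C : rmodType R) (p : {linear B -> C}) (f : {linear E -> C}),
    (forall c : C, exists b : B, p b = c) ->
    exists g : {linear E -> B}, forall e : E, p (g e) = f e.

Definition short_exact (R : pzRingType) (A B C : rmodType R)
    (f : {linear A -> B}) (g : {linear B -> C}) : Prop :=
  [/\ injective f,
      (forall c : C, exists b : B, g b = c) &
      (forall b : B, g b = 0 <-> exists a : A, f a = b)].

(* Main.v *)
Require Import Defs.
From HB Require Import structures.
From mathcomp Require Import all_boot all_order all_algebra.
Local Open Scope ring_scope.
Import GRing.Theory.

Definition mkLin (S : pzRingType) (U V : lmodType S) (a : U -> V)
  (H : linear a) : {linear U -> V} :=
  HB.pack a (GRing.isLinear.Build _ _ _ _ a H).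

Theorem mainTheorem1 (R : pzRingType) (M E : rmodType R)
    (j : {linear M -> E}) (hj : injective j)
    (hEinj : injective_module E) (hEproj : projective_module E) :
  forall (A B C : rmodType R) (f : {linear A -> B}) (g : {linear B -> C}),
    short_exact f g ->
    in_subinj_domain M A -> in_subinj_domain M C ->
    in_subinj_domain M B.
Proof.
move=> A B C f g [finj gsurj gker] sA sC.
move=> D i h iinj.
have [phi Hphi] := sC E j (g \o h) hj.
have [psi Hpsi] := hEproj B C g phi gsurj.
have ex m : exists a : A, f a == h m - psi (j m).
  have [a Ha] : exists a : A, f a = h m - psi (j m); last by exists a; apply/eqP.
  apply/gker; rewrite raddfB /= Hpsi Hphi /= subrr //.
pose al m := xchoose (ex m).
have alP m : f (al m) = h m - psi (j m) := eqP (xchooseP (ex m)).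
have alL : linear al.
  move=> a u v; apply: finj.
  rewrite linearP /= !alP !linearP /=.
  by rewrite scalerN addrACA scalerBr.
have [be Hbe] := sA E j (@mkLin _ _ _ _ alL) hj.
have [k Hk] := hEinj M D i j iinj.
pose H := (psi \+ (f \o be))%R.
exists (H \o k) => m /=.
rewrite Hk Hbe /= alP addrC subrK //.
Qed.
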